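(* Let $N^6$ be Calabi–Yau and let $\varphi(t)$, $t\in[0,T)$, be a family of $\mathrm{G}_2$-structures on $M=N\times L^1$ of the ansatz form, with $F=he^{i\theta}$ and $G$ depending on $(r,t)$, each coclosed, and satisfying the Laplacian coflow $\partial_t\psi=-\Delta_d\psi$. Then $h$ is constant (in both $r$ and $t$). Normalizing $h\equiv1$ (by rescaling the Calabi–Yau structure), the functions $\theta$ and $G$ satisfy $$\frac{\partial\theta}{\partial t}=\Delta\theta,\qquad \frac{\partial G}{\partial t}=-9G|\nabla\theta|^2,$$ where $\Delta$ is the rough Laplacian, $\nabla$ the gradient and $|\cdot|$ the norm of $g_7=G^2dr^2+g_6$; explicitly, $\partial_t\theta=\frac{\theta''}{G^2}-\frac{G'\theta'}{G^3}$ and $\partial_tG=-\frac{9(\theta')^2}{G}$.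
   Context: $\mathrm{G}_2$-structure: a 3-form $\varphi$ on a 7-manifold with $(X\lrcorner\varphi)\wedge(X\lrcorner\varphi)\wedge\varphi\ne0$ for $X\ne0$, inducing metric/orientation via $-\frac16(X\lrcorner\varphi)\wedge(Y\lrcorner\varphi)\wedge\varphi=g(X,Y)\mathrm{vol}$; $\psi=*\varphi$; coclosed means $d\psi=0$; $\Delta_d=dd^*+d^*d$ is the Hodge Laplacian of the time-dependent induced metric. Laplacian coflow: $\partial_t\psi=-\Delta_d\psi$. Calabi–Yau threefold $(N^6,g_6,\omega,\Omega)$: $\mathrm{SU}(3)$-structure (metric, Kähler form $\omega$, complex $(3,0)$-form $\Omega$ with $\omega^3/6=\frac i8\Omega\wedge\bar\Omega=\mathrm{vol}_6$; locally $\omega=\frac i2\sum\xi_p\wedge\bar\xi_p$, $\Omega=\xi_1\wedge\xi_2\wedge\xi_3$ for a unitary coframe) with $\omega,\Omega$ parallel. Ansatz: $L^1$ an interval or circle with coordinate $r$; $F=he^{i\theta}$ ($h>0$, $\theta$ real), $G>0$; $\varphi=\mathrm{Re}(F^3\Omega)-Gh^2dr\wedge\omega$, metric $g_7=G^2dr^2+h^2g_6$, $\psi=-G\,dr\wedge\mathrm{Im}(F^3\Omega)-h^4\omega^2/2$. For functions $f,\rho$ of $r$: rough Laplacian $\Delta f=\frac1{Gh^6}\left(\frac{f'h^6}{G}\right)'$ and $\langle\nabla f,\nabla\rho\rangle=f'\rho'/G^2$. $'$ denotes $\partial/\partial r$. *)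

(* Defs.v *)
From Stdlib Require Import Reals.
From Coquelicot Require Import Coquelicot.
From mathcomp Require Import all_boot.

Set Implicit Arguments.
Unset Strict Implicit.
Unset Printing Implicit Defensive.

Open Scope R_scope.

(* Pointwise coframe of M = N x L: index 0 is dr; indices 1..6 are
   x1,y1,x2,y2,x3,y3 with xi_p = x_p + i y_p a unitary coframe of g6.
   A (mixed-degree) form is given by its coefficients on the basis
   c_K = c_{k1} /\ ... /\ c_{km} (k1 < ... < km), K : {set 'I_7}, as a
   function of (r, t).  All forms occurring below lie in the subalgebra
   generated by dr and the parallel forms omega, Re Omega, Im Omega with
   coefficients depending on (r,t) only, on which d acts as dr /\ d/dr. *)
Definition form := R -> R -> {set 'I_7} -> R.

Definition idx (l : seq nat) : {set 'I_7} := [set i : 'I_7 | nat_of_ord i \in l].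

Definition bf (l : seq nat) (K : {set 'I_7}) : R := if K == idx l then 1 else 0.

Definition dr_idx : 'I_7 := ord0.

Definition ext_d (A : form) : form := fun r t K =>
  if dr_idx \in K then Derive (fun s => A s t (K :\ dr_idx)) r else 0.

(* sign of c_I /\ c_J = perm_sign I J * c_{I u J} for disjoint I, J *)
Definition perm_sign (I J : {set 'I_7}) : R :=
  (-1) ^ #|[set p : 'I_7 * 'I_7 |
             (p.1 \in I) && (p.2 \in J) && (nat_of_ord p.2 < nat_of_ord p.1)%N]|.

(* metric g7 = G^2 dr^2 + h^2 g6: |dr| = 1/G, |c_j| = 1/h (j >= 1);
   *c_I = perm_sign I I^c * (prod_{I^c} lambda / prod_I lambda) c_{I^c},
   lambda_0 = G, lambda_j = h; orientation dr /\ vol6 (vol6 = omega^3/6). *)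
Definition star_scale (h G : R) (I : {set 'I_7}) : R :=
  (if dr_idx \in I then / G else G) * h ^ (6 - #|I :\ dr_idx|) / h ^ #|I :\ dr_idx|.

Definition hodge (h G : R -> R -> R) (A : form) : form := fun r t K =>
  perm_sign (~: K) K * star_scale (h r t) (G r t) (~: K) * A r t (~: K).

(* codifferential in dimension 7: d* = (-1)^k * d * on k-forms *)
Definition codiff (h G : R -> R -> R) (A : form) : form := fun r t J =>
  (-1) ^ (#|J|.+1) * hodge h G (ext_d (hodge h G A)) r t J.

Definition hodge_lap (h G : R -> R -> R) (A : form) : form := fun r t K =>
  ext_d (codiff h G A) r t K + codiff h G (ext_d A) r t K.

Definition ReOm (K : {set 'I_7}) : R :=
  bf [:: 1; 3; 5]%N K - bf [:: 1; 4; 6]%N K - bf [:: 2; 3; 6]%N K - bf [:: 2; 4; 5]%N K.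
Definition ImOm (K : {set 'I_7}) : R :=
  bf [:: 1; 3; 6]%N K + bf [:: 1; 4; 5]%N K + bf [:: 2; 3; 5]%N K - bf [:: 2; 4; 6]%N K.
Definition drReOm (K : {set 'I_7}) : R :=
  bf [:: 0; 1; 3; 5]%N K - bf [:: 0; 1; 4; 6]%N K - bf [:: 0; 2; 3; 6]%N K - bf [:: 0; 2; 4; 5]%N K.
Definition drImOm (K : {set 'I_7}) : R :=
  bf [:: 0; 1; 3; 6]%N K + bf [:: 0; 1; 4; 5]%N K + bf [:: 0; 2; 3; 5]%N K - bf [:: 0; 2; 4; 6]%N K.
Definition omega2half (K : {set 'I_7}) : R :=
  bf [:: 1; 2; 3; 4]%N K + bf [:: 1; 2; 5; 6]%N K + bf [:: 3; 4; 5; 6]%N K.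

(* psi = - G dr /\ Im(F^3 Omega) - h^4 omega^2/2, F = h e^{i theta},
   Im(F^3 Omega) = h^3 (sin(3 theta) Re Omega + cos(3 theta) Im Omega) *)
Definition psi_ansatz (h th G : R -> R -> R) : form := fun r t K =>
  - G r t * (h r t) ^ 3 *
      (sin (3 * th r t) * drReOm K + cos (3 * th r t) * drImOm K)
  - (h r t) ^ 4 * omega2half K.

Definition in_open_int (a b : Rbar) (x : R) : Prop := Rbar_lt a x /\ Rbar_lt x b.

(* Main.v *)
Require Import Defs.
From Stdlib Require Import Reals Lra.
From Coquelicot Require Import Coquelicot.
From mathcomp Require Import all_boot.
Open Scope R_scope.
Set Implicit Arguments.
Unset Strict Implicit.

Lemma card_ordP (P : nat -> bool) : #|[pred i : 'I_7 | P i]| = count P (iota 0 7).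
Proof. by rewrite cardE size_filter -enumT -val_enum_ord count_map. Qed.

Lemma card_pairP (P : nat -> nat -> bool) : #|[pred p : 'I_7*'I_7 | P p.1 p.2]| =
  count (fun q => P q.1 q.2) [seq (x,y) | x <- iota 0 7, y <- iota 0 7].
Proof.
rewrite cardE size_filter [in LHS]unlock /prod_enum -!val_enum_ord.
have -> : [seq (x,y) | x <- map val (enum 'I_7), y <- map val (enum 'I_7)] =
   map (fun p : 'I_7*'I_7 => (val p.1, val p.2)) [seq (x,y) | x <- enum 'I_7, y <- enum 'I_7].
  by rewrite map_allpairs allpairs_mapl allpairs_mapr.
rewrite count_map. by apply: eq_count => -[x y].
Qed.

Lemma ps_idx (l1 l2 : seq nat) (n : nat) :
  count (fun q => (q.1 \in l1) && (q.2 \in l2) && (q.2 < q.1)%N)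
     [seq (x,y) | x <- iota 0 7, y <- iota 0 7] == n ->
  perm_sign (idx l1) (idx l2) = (-1) ^ n.
Proof.
move/eqP=> <-; rewrite /perm_sign -(card_pairP (fun x y => (x \in l1) && (y \in l2) && (y < x)%N)).
congr (_ ^ _); apply: eq_card => p; by rewrite !inE.
Qed.

Lemma card_idx l : #|idx l| = count (fun i => i \in l) (iota 0 7).
Proof. rewrite -(card_ordP (fun i => i \in l)); apply: eq_card => i; by rewrite inE. Qed.

Lemma idx_eq l1 l2 : (idx l1 == idx l2) = all (fun i => (i \in l1) == (i \in l2)) (iota 0 7).
Proof.
apply/eqP/allP => [E i Hi | H].
  have Hi7 : (i < 7)%N by rewrite mem_iota in Hi.
  have := congr1 (fun S : {set 'I_7} => Ordinal Hi7 \in S) E; rewrite /= !inE /= => ->; exact: eqxx.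
apply/setP => j; rewrite !inE; apply/eqP; apply: H; by rewrite mem_iota ltn_ord.
Qed.

Ltac setsolve := apply/setP => -[[|[|[|[|[|[|[|?]]]]]]] ?]; rewrite !inE //.

Lemma star_scale_3 (I J : {set 'I_7}) x y : dr_idx \in I -> I :\ dr_idx = J -> #|J| = 3%N ->
  x <> 0 -> star_scale x y I = / y.
Proof. move=> HI HJ HC Hx. rewrite /star_scale HI HJ HC (_ : (6 - 3)%N = 3%N) // /Rdiv Rmult_assoc Rinv_r ?Rmult_1_r //; exact: pow_nonzero. Qed.

Lemma hodgeE h G A r t K : hodge h G A r t K =
  perm_sign (~: K) K * star_scale (h r t) (G r t) (~: K) * A r t (~: K).
Proof. by []. Qed.

Lemma C135 : ~: idx [:: 1;3;5]%N = idx [:: 0;2;4;6]%N. Proof. setsolve. Qed.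
Lemma C246 : ~: idx [:: 2;4;6]%N = idx [:: 0;1;3;5]%N. Proof. setsolve. Qed.
Lemma C136 : ~: idx [:: 1;3;6]%N = idx [:: 0;2;4;5]%N. Proof. setsolve. Qed.
Lemma C245 : ~: idx [:: 2;4;5]%N = idx [:: 0;1;3;6]%N. Proof. setsolve. Qed.
Lemma D0135 : idx [:: 0;1;3;5]%N :\ dr_idx = idx [:: 1;3;5]%N. Proof. setsolve. Qed.
Lemma D0246 : idx [:: 0;2;4;6]%N :\ dr_idx = idx [:: 2;4;6]%N. Proof. setsolve. Qed.
Lemma D0136 : idx [:: 0;1;3;6]%N :\ dr_idx = idx [:: 1;3;6]%N. Proof. setsolve. Qed.
Lemma D0245 : idx [:: 0;2;4;5]%N :\ dr_idx = idx [:: 2;4;5]%N. Proof. setsolve. Qed.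
Lemma D01234 : idx [:: 0;1;2;3;4]%N :\ dr_idx = idx [:: 1;2;3;4]%N. Proof. setsolve. Qed.
Lemma drin l : (0 \in l)%N -> dr_idx \in idx l. Proof. by rewrite inE. Qed.
Lemma drnotin1234 : dr_idx \in idx [:: 1;2;3;4]%N = false. Proof. by rewrite inE. Qed.
Lemma card135 : #|idx [:: 1;3;5]%N| = 3%N. Proof. rewrite card_idx; by vm_compute. Qed.
Lemma card136 : #|idx [:: 1;3;6]%N| = 3%N. Proof. rewrite card_idx; by vm_compute. Qed.
Lemma card246 : #|idx [:: 2;4;6]%N| = 3%N. Proof. rewrite card_idx; by vm_compute. Qed.
Lemma card245 : #|idx [:: 2;4;5]%N| = 3%N. Proof. rewrite card_idx; by vm_compute. Qed.
Lemma ps0246 : perm_sign (idx [:: 0;2;4;6]%N) (idx [:: 1;3;5]%N) = 1.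
Proof. rewrite (@ps_idx _ _ 6%N); [simpl; ring | by vm_compute]. Qed.
Lemma ps0135 : perm_sign (idx [:: 0;1;3;5]%N) (idx [:: 2;4;6]%N) = -1.
Proof. rewrite (@ps_idx _ _ 3%N); [simpl; ring | by vm_compute]. Qed.
Lemma ps0245 : perm_sign (idx [:: 0;2;4;5]%N) (idx [:: 1;3;6]%N) = -1.
Proof. rewrite (@ps_idx _ _ 5%N); [simpl; ring | by vm_compute]. Qed.
Lemma ps0136 : perm_sign (idx [:: 0;1;3;6]%N) (idx [:: 2;4;5]%N) = 1.
Proof. rewrite (@ps_idx _ _ 4%N); [simpl; ring | by vm_compute]. Qed.

Ltac bfsolve := rewrite /psi_ansatz /drReOm /drImOm /omega2half /bf !idx_eq /=; ring.

Lemma psi0135 h th G r t : psi_ansatz h th G r t (idx [:: 0;1;3;5]%N) = - G r t * h r t ^ 3 * sin (3 * th r t).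
Proof. bfsolve. Qed.
Lemma psi0136 h th G r t : psi_ansatz h th G r t (idx [:: 0;1;3;6]%N) = - G r t * h r t ^ 3 * cos (3 * th r t).
Proof. bfsolve. Qed.
Lemma psi1234 h th G r t : psi_ansatz h th G r t (idx [:: 1;2;3;4]%N) = - h r t ^ 4.
Proof. bfsolve. Qed.
Lemma loc_int (a b : Rbar) x : in_open_int a b x -> locally x (in_open_int a b).
Proof.
move=> Hx. have Ho : open (in_open_int a b).
  exact: (open_and _ _ (open_Rbar_gt a) (open_Rbar_lt b)).
exact: Ho.
Qed.

Lemma between_int (a b : Rbar) x y z : in_open_int a b x -> in_open_int a b y ->
  Rmin x y <= z <= Rmax x y -> in_open_int a b z.
Proof.
move=> [Hax Hxb] [Hay Hyb] Hz.
have H1 : Rbar_lt a (Rmin x y).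
  by rewrite /Rmin; case: Rle_dec.
have H2 : Rbar_lt (Rmax x y) b.
  by rewrite /Rmax; case: Rle_dec.
split.
  apply: (Rbar_lt_le_trans _ _ _ H1); simpl; lra.
apply: (Rbar_le_lt_trans _ _ _ _ H2); simpl; lra.
Qed.

Lemma const_int (a b : Rbar) (f : R -> R) :
  (forall x, in_open_int a b x -> is_derive f x 0) ->
  forall x y, in_open_int a b x -> in_open_int a b y -> f x = f y.
Proof.
move=> Hd x y Hx Hy.
destruct (MVT_gen f x y (fun _ => 0)) as [c [_ Hc]].
- by move=> z Hz; apply: Hd; apply: (between_int Hx Hy); lra.
- move=> z Hz; apply/continuity_pt_filterlim; apply: ex_derive_continuous.
  by exists 0; apply: Hd; apply: (between_int Hx Hy).
- rewrite Rmult_0_l in Hc; lra.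
Qed.

Lemma ex_int (a b : Rbar) : Rbar_lt a b -> exists x, in_open_int a b x.
Proof.
case: a => [a| |]; case: b => [b| |] //= H.
- exists ((a + b) / 2); split => /=; lra.
- exists (a + 1); split => /=; lra.
- exists (b - 1); split => /=; lra.
- by exists 0.
Qed.

Lemma ext_d_loc0 (X : form) r t L :
  locally r (fun u => forall L', X u t L' = 0) -> ext_d X r t L = 0.
Proof.
move=> H; rewrite /ext_d; case: ifP => // _.
rewrite (Derive_ext_loc _ (fun _ => 0)) ?Derive_const //.
by apply: filter_imp H => u Hu; apply: Hu.
Qed.

Lemma ss0246 x y : x <> 0 -> star_scale x y (idx [:: 0;2;4;6]%N) = / y.
Proof. move=> Hx; apply: (star_scale_3 (J := idx [:: 2;4;6]%N)); [by rewrite inE | exact: D0246 | exact: card246 | exact: Hx]. Qed.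
Lemma ss0135 x y : x <> 0 -> star_scale x y (idx [:: 0;1;3;5]%N) = / y.
Proof. move=> Hx; apply: (star_scale_3 (J := idx [:: 1;3;5]%N)); [by rewrite inE | exact: D0135 | exact: card135 | exact: Hx]. Qed.
Lemma ss0245 x y : x <> 0 -> star_scale x y (idx [:: 0;2;4;5]%N) = / y.
Proof. move=> Hx; apply: (star_scale_3 (J := idx [:: 2;4;5]%N)); [by rewrite inE | exact: D0245 | exact: card245 | exact: Hx]. Qed.
Lemma ss0136 x y : x <> 0 -> star_scale x y (idx [:: 0;1;3;6]%N) = / y.
Proof. move=> Hx; apply: (star_scale_3 (J := idx [:: 1;3;6]%N)); [by rewrite inE | exact: D0136 | exact: card136 | exact: Hx]. Qed.

Lemma Req (x y : R) : x = y -> x = y. Proof. by []. Qed.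

Section Main.
Variables (a b T : Rbar) (h th G : R -> R -> R).
Hypothesis Hpos : forall r t, in_open_int a b r -> in_open_int 0 T t \/ t = 0 -> 0 < h r t /\ 0 < G r t.
Hypothesis Hsm : forall r t (n : nat), in_open_int a b r -> in_open_int 0 T t \/ t = 0 ->
     ex_derive_n (fun s => h s t) n r /\ ex_derive_n (fun s => th s t) n r /\
     ex_derive_n (fun s => G s t) n r.
Hypothesis Hcoc : forall r t K, in_open_int a b r -> in_open_int 0 T t \/ t = 0 ->
     ext_d (psi_ansatz h th G) r t K = 0.

Hypothesis Htd : forall r t, in_open_int a b r -> in_open_int 0 T t ->
     ex_derive (fun s => h r s) t /\ ex_derive (fun s => th r s) t /\
     ex_derive (fun s => G r s) t.
Hypothesis Hflow : forall r t K, in_open_int a b r -> in_open_int 0 T t ->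
     Derive (fun s => psi_ansatz h th G r s K) t =
       - hodge_lap h G (psi_ansatz h th G) r t K.

Hypothesis Hab : Rbar_lt a b.
Hypothesis HT0 : Rbar_lt 0 T.
Hypothesis Hcont : forall r, in_open_int a b r ->
     filterlim (fun s => h r s) (at_right 0) (locally (h r 0)) /\
     filterlim (fun s => th r s) (at_right 0) (locally (th r 0)) /\
     filterlim (fun s => G r s) (at_right 0) (locally (G r 0)).

Local Notation psi := (psi_ansatz h th G).

Lemma codiff_d0 r t J : in_open_int a b r -> in_open_int 0 T t \/ t = 0 ->
  codiff h G (ext_d psi) r t J = 0.
Proof.
move=> Hr Ht; rewrite /codiff hodgeE ext_d_loc0 ?Rmult_0_r //.
apply: filter_imp (loc_int Hr) => u Hu L'.
by rewrite hodgeE Hcoc // Rmult_0_r.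
Qed.

Lemma h_r0 r t : in_open_int a b r -> in_open_int 0 T t \/ t = 0 ->
  is_derive (fun s => h s t) r 0.
Proof.
move=> Hr Ht.
have H := Hcoc (idx [:: 0;1;2;3;4]%N) Hr Ht.
rewrite /ext_d drin // D01234 in H.
have [Hh _] := Hsm 1 Hr Ht.
have [hp _] := Hpos Hr Ht.
have D : is_derive (fun s => psi s t (idx [:: 1;2;3;4]%N)) r
   (- (4 * h r t ^ 3 * Derive (fun s => h s t) r)).
  eapply (is_derive_ext (fun s => - h s t ^ 4)); first by move=> s; rewrite psi1234.
  auto_derive; first exact Hh.
  simpl; ring.
rewrite (is_derive_unique _ _ _ D) in H.
have -> : 0 = Derive (fun s => h s t) r.
  have : 0 < h r t ^ 3 by apply: pow_lt.
  nra.
exact: Derive_correct.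
Qed.


Lemma codiff135 s t c : in_open_int a b s -> in_open_int 0 T t ->
  (forall u, in_open_int a b u -> h u t = c) ->
  codiff h G psi s t (idx [:: 1;3;5]%N) =
    3 * c ^ 3 * cos (3 * th s t) * Derive (fun u => th u t) s / G s t.
Proof.
move=> Hs Ht Hc.
have [hp Gp] := Hpos Hs (or_introl Ht).
have [_ [Hth _]] := Hsm 1 Hs (or_introl Ht).
rewrite /codiff card135 hodgeE C135 ps0246 ss0246; last lra.
rewrite /ext_d drin // D0246.
have D : is_derive (fun u => hodge h G psi u t (idx [:: 2;4;6]%N)) s
   (c ^ 3 * (3 * Derive (fun u => th u t) s * cos (3 * th s t))).
  eapply (is_derive_ext_loc (fun u => c ^ 3 * sin (3 * th u t))).
    apply: filter_imp (loc_int Hs) => u Hu.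
    have [hu Gu] := Hpos Hu (or_introl Ht).
    rewrite hodgeE C246 ps0135 ss0135; last lra.
    rewrite psi0135 Hc //.
    apply: Req; field; lra.
  auto_derive; first exact Hth.
  simpl; ring.
rewrite (is_derive_unique _ _ _ D) /=. field; lra.
Qed.

Lemma codiff136 s t c : in_open_int a b s -> in_open_int 0 T t ->
  (forall u, in_open_int a b u -> h u t = c) ->
  codiff h G psi s t (idx [:: 1;3;6]%N) =
    - 3 * c ^ 3 * sin (3 * th s t) * Derive (fun u => th u t) s / G s t.
Proof.
move=> Hs Ht Hc.
have [hp Gp] := Hpos Hs (or_introl Ht).
have [_ [Hth _]] := Hsm 1 Hs (or_introl Ht).
rewrite /codiff card136 hodgeE C136 ps0245 ss0245; last lra.
rewrite /ext_d drin // D0245.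
have D : is_derive (fun u => hodge h G psi u t (idx [:: 2;4;5]%N)) s
   (c ^ 3 * (3 * Derive (fun u => th u t) s * sin (3 * th s t))).
  eapply (is_derive_ext_loc (fun u => - c ^ 3 * cos (3 * th u t))).
    apply: filter_imp (loc_int Hs) => u Hu.
    have [hu Gu] := Hpos Hu (or_introl Ht).
    rewrite hodgeE C245 ps0136 ss0136; last lra.
    rewrite psi0136 Hc //.
    apply: Req; field; lra.
  auto_derive; first exact Hth.
  simpl; ring.
rewrite (is_derive_unique _ _ _ D) /=. field; lra.
Qed.

Lemma h_t0 r t : in_open_int a b r -> in_open_int 0 T t ->
  is_derive (fun s => h r s) t 0.
Proof.
move=> Hr Ht.
have H := Hflow (idx [:: 1;2;3;4]%N) Hr Ht.
rewrite /hodge_lap codiff_d0 // ?Rplus_0_r in H; last by left.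
rewrite /ext_d drnotin1234 in H.
have [Hh _] := Htd Hr Ht.
have [hp _] := Hpos Hr (or_introl Ht).
have D : is_derive (fun s => psi r s (idx [:: 1;2;3;4]%N)) t
   (- (4 * h r t ^ 3 * Derive (fun s => h r s) t)).
  eapply (is_derive_ext (fun s => - h r s ^ 4)); first by move=> s; rewrite psi1234.
  auto_derive; first exact Hh.
  simpl; ring.
rewrite (is_derive_unique _ _ _ D) in H.
have -> : 0 = Derive (fun s => h r s) t.
  have : 0 < h r t ^ 3 by apply: pow_lt.
  nra.
exact: Derive_correct.
Qed.

Lemma flow1 r t c : in_open_int a b r -> in_open_int 0 T t ->
  (forall u, in_open_int a b u -> h u t = c) ->
  (forall s, in_open_int 0 T s -> h r s = c) -> 0 < c ->
  Derive (fun s => G r s) t * sin (3 * th r t) +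
    3 * G r t * Derive (fun s => th r s) t * cos (3 * th r t) =
  3 * (cos (3 * th r t) * Derive (fun s => Derive (fun u => th u t) s) r / G r t
       - 3 * sin (3 * th r t) * Derive (fun u => th u t) r ^ 2 / G r t
       - cos (3 * th r t) * Derive (fun u => th u t) r * Derive (fun u => G u t) r / G r t ^ 2).
Proof.
move=> Hr Ht Hc Hct cp.
have H := Hflow (idx [:: 0;1;3;5]%N) Hr Ht.
rewrite /hodge_lap codiff_d0 ?Rplus_0_r // in H; last by left.
rewrite /ext_d drin // D0135 in H.
have [_ [Htt HGt]] := Htd Hr Ht.
have [_ [Hth1 HG1]] := Hsm 1 Hr (or_introl Ht).
have [_ [Hth2 _]] := Hsm 2 Hr (or_introl Ht).
have [hp Gp] := Hpos Hr (or_introl Ht).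
have DT : is_derive (fun s => psi r s (idx [:: 0;1;3;5]%N)) t
   (- (c ^ 3 * (Derive (fun s => G r s) t * sin (3 * th r t) +
    3 * G r t * Derive (fun s => th r s) t * cos (3 * th r t)))).
  eapply (is_derive_ext_loc (fun s => - G r s * c ^ 3 * sin (3 * th r s))).
    apply: filter_imp (loc_int Ht) => s Hs.
    by rewrite psi0135 Hct.
  auto_derive; first by split.
  simpl; ring.
have DR : is_derive (fun s => codiff h G psi s t (idx [:: 1;3;5]%N)) r
   (- (c ^ 3 * (- (3 * (cos (3 * th r t) * Derive (fun s => Derive (fun u => th u t) s) r / G r t
       - 3 * sin (3 * th r t) * Derive (fun u => th u t) r ^ 2 / G r t
       - cos (3 * th r t) * Derive (fun u => th u t) r * Derive (fun u => G u t) r / G r t ^ 2))))).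
  eapply (is_derive_ext_loc (fun s => 3 * c ^ 3 * cos (3 * th s t) * Derive (fun u => th u t) s / G s t)).
    apply: filter_imp (loc_int Hr) => s Hs.
    by rewrite (codiff135 Hs Ht Hc).
  auto_derive.
    split; [exact Hth1 | split; [exact Hth2 | split; [exact HG1 | split; [lra|done]]]].
  simpl; apply: Req; field; lra.
rewrite (is_derive_unique _ _ _ DT) (is_derive_unique _ _ _ DR) in H.
have c3 : 0 < c ^ 3 by apply: pow_lt.
apply: (Rmult_eq_reg_l (c ^ 3)); last lra.
lra.
Qed.

Lemma flow2 r t c : in_open_int a b r -> in_open_int 0 T t ->
  (forall u, in_open_int a b u -> h u t = c) ->
  (forall s, in_open_int 0 T s -> h r s = c) -> 0 < c ->
  Derive (fun s => G r s) t * cos (3 * th r t) -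
    3 * G r t * Derive (fun s => th r s) t * sin (3 * th r t) =
  - 3 * (sin (3 * th r t) * Derive (fun s => Derive (fun u => th u t) s) r / G r t
       + 3 * cos (3 * th r t) * Derive (fun u => th u t) r ^ 2 / G r t
       - sin (3 * th r t) * Derive (fun u => th u t) r * Derive (fun u => G u t) r / G r t ^ 2).
Proof.
move=> Hr Ht Hc Hct cp.
have H := Hflow (idx [:: 0;1;3;6]%N) Hr Ht.
rewrite /hodge_lap codiff_d0 ?Rplus_0_r // in H; last by left.
rewrite /ext_d drin // D0136 in H.
have [_ [Htt HGt]] := Htd Hr Ht.
have [_ [Hth1 HG1]] := Hsm 1 Hr (or_introl Ht).
have [_ [Hth2 _]] := Hsm 2 Hr (or_introl Ht).
have [hp Gp] := Hpos Hr (or_introl Ht).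
have DT : is_derive (fun s => psi r s (idx [:: 0;1;3;6]%N)) t
   (- (c ^ 3 * (Derive (fun s => G r s) t * cos (3 * th r t) -
    3 * G r t * Derive (fun s => th r s) t * sin (3 * th r t)))).
  eapply (is_derive_ext_loc (fun s => - G r s * c ^ 3 * cos (3 * th r s))).
    apply: filter_imp (loc_int Ht) => s Hs.
    by rewrite psi0136 Hct.
  auto_derive; first by split.
  simpl; ring.
have DR : is_derive (fun s => codiff h G psi s t (idx [:: 1;3;6]%N)) r
   (c ^ 3 * (- 3 * (sin (3 * th r t) * Derive (fun s => Derive (fun u => th u t) s) r / G r t
       + 3 * cos (3 * th r t) * Derive (fun u => th u t) r ^ 2 / G r t
       - sin (3 * th r t) * Derive (fun u => th u t) r * Derive (fun u => G u t) r / G r t ^ 2))).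
  eapply (is_derive_ext_loc (fun s => - 3 * c ^ 3 * sin (3 * th s t) * Derive (fun u => th u t) s / G s t)).
    apply: filter_imp (loc_int Hr) => s Hs.
    by rewrite (codiff136 Hs Ht Hc).
  auto_derive.
    split; [exact Hth1 | split; [exact Hth2 | split; [exact HG1 | split; [lra|done]]]].
  simpl; apply: Req; field; lra.
rewrite (is_derive_unique _ _ _ DT) (is_derive_unique _ _ _ DR) in H.
have c3 : 0 < c ^ 3 by apply: pow_lt.
apply: (Rmult_eq_reg_l (c ^ 3)); last lra.
lra.
Qed.

Lemma main_sec :
  (exists c : R, forall r t, in_open_int a b r -> in_open_int 0 T t \/ t = 0 -> h r t = c) /\
  (forall r t, in_open_int a b r -> in_open_int 0 T t ->
     Derive (fun s => th r s) t =
       Derive_n (fun s => th s t) 2 r / (G r t) ^ 2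
       - Derive (fun s => G s t) r * Derive (fun s => th s t) r / (G r t) ^ 3 /\
     Derive (fun s => G r s) t = - 9 * (Derive (fun s => th s t) r) ^ 2 / G r t).
Proof.
have HS : forall t, in_open_int 0 T t \/ t = 0 -> forall r1 r2,
    in_open_int a b r1 -> in_open_int a b r2 -> h r1 t = h r2 t.
  move=> t Ht r1 r2 H1 H2; apply: (const_int (a := a) (b := b) (f := fun s => h s t)) => // x Hx.
  exact: h_r0.
have HTc : forall r, in_open_int a b r -> forall t1 t2,
    in_open_int 0 T t1 -> in_open_int 0 T t2 -> h r t1 = h r t2.
  move=> r Hr t1 t2 H1 H2.
  apply: (const_int (a := Rbar.Finite 0) (b := T) (f := fun s => h r s)) => // x Hx.
  exact: h_t0.
have H0 : forall r, in_open_int a b r -> forall t, in_open_int 0 T t -> h r t = h r 0.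
  move=> r Hr t Ht. have [L1 _] := Hcont Hr.
  apply: (filterlim_locally_unique (F := at_right 0) (fun s => h r s)); last exact L1.
  apply: (filterlim_ext_loc (fun _ => h r t)); last exact: filterlim_const.
  have tp : 0 < t by case: Ht.
  exists (mkposreal t tp) => y Hy Hy0.
  change (Rabs (y - 0) < t) in Hy.
  apply: HTc => //.
  have [_ HtT] := Ht.
  split => //.
  apply: (Rbar_lt_trans _ (Rbar.Finite t)) => //=.
  move: Hy; rewrite Rminus_0_r Rabs_pos_eq; lra.
have [r0 Hr0] := ex_int Hab.
split.
  exists (h r0 0) => r t Hr [Ht|->].
    rewrite (H0 r Hr t Ht); apply: HS => //; by right.
  apply: HS => //; by right.
move=> r t Hr Ht.
have Hc : forall u, in_open_int a b u -> h u t = h r t.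
  by move=> u Hu; apply: HS => //; left.
have Hct : forall s, in_open_int 0 T s -> h r s = h r t.
  by move=> s Hs; apply: HTc.
have [cp Gp] := Hpos Hr (or_introl Ht).
have E1 := flow1 Hr Ht Hc Hct cp.
have E2 := flow2 Hr Ht Hc Hct cp.
have Hsc := sin2_cos2 (3 * th r t). rewrite /Rsqr in Hsc.
change (Derive_n (fun s => th s t) 2 r) with (Derive (fun s => Derive (fun u => th u t) s) r).
set S := sin (3 * th r t) in E1 E2 Hsc *.
set C := cos (3 * th r t) in E1 E2 Hsc *.
set Gt := Derive (fun s => G r s) t in E1 E2 *.
set tht := Derive (fun s => th r s) t in E1 E2 *.
set th2 := Derive (fun s => Derive (fun u => th u t) s) r in E1 E2 *.
set th1 := Derive (fun u => th u t) r in E1 E2 *.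
set G1 := Derive (fun u => G u t) r in E1 E2 *.
set g := G r t in E1 E2 Gp *.
have A : 3 * g * tht = C * (Gt * S + 3 * g * tht * C) - S * (Gt * C - 3 * g * tht * S).
  have -> : C * (Gt * S + 3 * g * tht * C) - S * (Gt * C - 3 * g * tht * S) =
    3 * g * tht * (S * S + C * C) by ring.
  rewrite Hsc; ring.
have A2 : Gt = S * (Gt * S + 3 * g * tht * C) + C * (Gt * C - 3 * g * tht * S).
  have -> : S * (Gt * S + 3 * g * tht * C) + C * (Gt * C - 3 * g * tht * S) =
    Gt * (S * S + C * C) by ring.
  rewrite Hsc; ring.
rewrite E1 E2 in A A2.
split.
  apply: (Rmult_eq_reg_l (3 * g)); last lra.
  rewrite A.
  have -> : C * (3 * (C * th2 / g - 3 * S * th1 ^ 2 / g - C * th1 * G1 / g ^ 2)) -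
      S * (-3 * (S * th2 / g + 3 * C * th1 ^ 2 / g - S * th1 * G1 / g ^ 2)) =
      3 * g * (th2 / g ^ 2 - G1 * th1 / g ^ 3) * (S * S + C * C).
    field; lra.
  rewrite Hsc; ring.
rewrite A2.
have -> : S * (3 * (C * th2 / g - 3 * S * th1 ^ 2 / g - C * th1 * G1 / g ^ 2)) +
    C * (-3 * (S * th2 / g + 3 * C * th1 ^ 2 / g - S * th1 * G1 / g ^ 2)) =
    - 9 * th1 ^ 2 / g * (S * S + C * C).
  field; lra.
rewrite Hsc; ring.
Qed.

End Main.

Theorem mainTheorem6 (a b T : Rbar) (h th G : R -> R -> R) :
  Rbar_lt a b -> Rbar_lt 0 T ->
  (* G2-structure of ansatz form: h > 0, G > 0 *)
  (forall r t, in_open_int a b r -> in_open_int 0 T t \/ t = 0 -> 0 < h r t /\ 0 < G r t) ->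
  (* smoothness in r *)
  (forall r t (n : nat), in_open_int a b r -> in_open_int 0 T t \/ t = 0 ->
     ex_derive_n (fun s => h s t) n r /\ ex_derive_n (fun s => th s t) n r /\
     ex_derive_n (fun s => G s t) n r) ->
  (* differentiability in t on (0,T), right-continuity at t = 0 *)
  (forall r t, in_open_int a b r -> in_open_int 0 T t ->
     ex_derive (fun s => h r s) t /\ ex_derive (fun s => th r s) t /\
     ex_derive (fun s => G r s) t) ->
  (forall r, in_open_int a b r ->
     filterlim (fun s => h r s) (at_right 0) (locally (h r 0)) /\
     filterlim (fun s => th r s) (at_right 0) (locally (th r 0)) /\
     filterlim (fun s => G r s) (at_right 0) (locally (G r 0))) ->
  (* coclosed: d psi = 0 *)
  (forall r t K, in_open_int a b r -> in_open_int 0 T t \/ t = 0 ->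
     ext_d (psi_ansatz h th G) r t K = 0) ->
  (* Laplacian coflow: d/dt psi = - Delta_d psi *)
  (forall r t K, in_open_int a b r -> in_open_int 0 T t ->
     Derive (fun s => psi_ansatz h th G r s K) t =
       - hodge_lap h G (psi_ansatz h th G) r t K) ->
  (exists c : R, forall r t, in_open_int a b r -> in_open_int 0 T t \/ t = 0 -> h r t = c) /\
  (forall r t, in_open_int a b r -> in_open_int 0 T t ->
     Derive (fun s => th r s) t =
       Derive_n (fun s => th s t) 2 r / (G r t) ^ 2
       - Derive (fun s => G s t) r * Derive (fun s => th s t) r / (G r t) ^ 3 /\
     Derive (fun s => G r s) t = - 9 * (Derive (fun s => th s t) r) ^ 2 / G r t).
Proof.
intros; eapply main_sec; eassumption.
Qed.
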